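(* Let $H$ be a clutter, $T$ a minimal transversal of $H$, $S\subseteq V(H)$ and $x\in V(H)$. Then either (i) there exists a minimal transversal $T'\subseteq T\setminus\{x\}$ of $H\backslash x$ such that $T'\cap S=(T\setminus\{x\})\cap S$; or (ii) there exist a vertex $z\in S\setminus\{x\}$ and an edge $h\in E(H)$ such that $x\in h$, $h\cap T=\{z\}$, and $T\setminus\{z\}\in b(H\circ(h,x,z))$.
   Context: A hypergraph has a finite vertex set and a set of subsets (edges). A clutter is a hypergraph in which no edge is a proper subset of another; $cl(\cdot)$ keeps only the inclusion-wise minimal edges. A transversal of $H$ is a vertex set meeting every edge; $b(H)$ is the clutter of inclusion-wise minimal transversals. For $v\in V(H)$: $H\backslash v=(V(H)\setminus\{v\},\{h\in E(H):v\notin h\})$ and $H/v=cl(V(H)\setminus\{v\},\{h\setminus\{v\}:h\in E(H)\})$. For disjoint $D,C\subseteq V(H)$, $H[D;C]$ is the clutter obtained by deleting all vertices of $D$ and contracting all vertices of $C$ (the order does not matter). The join of clutters is $H\vee F=cl(V(H)\cup V(F),E(H)\cup E(F))$. For an edge $h\in E(H)$ and distinct $u,v\in h$, $H\circ(h,u,v)=H[\{u\};h\setminus\{u\}]\vee H[\{v\};h\setminus\{v\}]$. *)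

(* Defs.v *)
From mathcomp Require Import all_boot.
Set Implicit Arguments. Unset Strict Implicit. Unset Printing Implicit Defensive.

Record hgraph (T : finType) := Hg { hV : {set T}; hE : {set {set T}} }.

Section Hyper.
Variable T : finType.
Implicit Types (H F : hgraph T) (X Y A D C h : {set T}) (v u : T).

Definition is_hypergraph H : Prop := forall h, h \in hE H -> h \subset hV H.

Definition is_clutter H : Prop :=
  is_hypergraph H /\
  forall h h', h \in hE H -> h' \in hE H -> ~ (h \proper h').

Definition cl H : hgraph T :=
  Hg (hV H) [set h in hE H | [forall h', (h' \in hE H) ==> ~~ (h' \proper h)]].

Definition transversal H X : bool :=
  (X \subset hV H) && [forall h in hE H, h :&: X != set0].

Definition min_transversal H X : bool :=
  transversal H X && [forall Y : {set T}, (Y \proper X) ==> ~~ transversal H Y].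

Definition blocker H : hgraph T :=
  Hg (hV H) [set X | min_transversal H X].

Definition hdel H v : hgraph T :=
  Hg (hV H :\ v) [set h in hE H | v \notin h].
Definition hcon H v : hgraph T :=
  cl (Hg (hV H :\ v) [set h :\ v | h in hE H]).

Definition minor H D C : hgraph T :=
  foldl hcon (foldl hdel H (enum D)) (enum C).

Definition hjoin H F : hgraph T := cl (Hg (hV H :|: hV F) (hE H :|: hE F)).

Definition hcirc H h u v : hgraph T :=
  hjoin (minor H [set u] (h :\ u)) (minor H [set v] (h :\ v)).

End Hyper.

(* Main.v *)
Require Import Defs.
From mathcomp Require Import all_boot.

Set Implicit Arguments. Unset Strict Implicit. Unset Printing Implicit Defensive.

Section Aux.
Variable U : finType.
Implicit Types (G : hgraph U) (W X Y : {set U}) (P Q : {set {set U}}).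

Definition refines P Q := forall e, e \in P -> exists2 f, f \in Q & f \subset e.
Definition heq G W P := [/\ hV G = W, refines (hE G) P & refines P (hE G)].

Lemma hits_ref P Q X : refines P Q ->
  (forall f, f \in Q -> f :&: X != set0) -> forall e, e \in P -> e :&: X != set0.
Proof.
move=> R HQ e /R [f fQ fe]; have /set0Pn [y] := HQ f fQ.
rewrite inE => /andP [yf yX]; apply/set0Pn; exists y.
by rewrite inE (subsetP fe) ?yf.
Qed.

Lemma heq_trans G W P X : heq G W P ->
  Defs.transversal G X = (X \subset W) && [forall e in P, e :&: X != set0].
Proof.
case=> eV R1 R2; rewrite /Defs.transversal eV; congr (_ && _).
apply/forallP/forallP => H0 e; apply/implyP => eP.
- by apply: (hits_ref R2 _ eP) => f fE; have := H0 f; rewrite fE.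
- by apply: (hits_ref R1 _ eP) => f fE; have := H0 f; rewrite fE.
Qed.

Lemma cl_min G e : e \in hE G -> exists2 f, f \in hE (cl G) & f \subset e.
Proof.
move=> eE.
have PE : [pred f | (f \in hE G) && (f \subset e)] e by rewrite inE eE subxx.
have [f /minsetP [/andP [fE fe] fmin] _] := minset_exists PE.
exists f => //; rewrite /cl /= inE fE /=; apply/forallP => h'; apply/implyP => h'E.
apply/negP => /andP [h'f nfh'].
have eq : h' = f by apply: fmin => //; rewrite inE h'E (subset_trans h'f fe).
by move: nfh'; rewrite eq subxx.
Qed.

Lemma heq_cl G W P : heq G W P -> heq (cl G) W P.
Proof.
case=> eV R1 R2; split => //.
- by move=> f; rewrite /cl /= inE => /andP [/R1].
- move=> e /R2 [f fE fe]; have [g gE gf] := cl_min fE.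
  by exists g => //; apply: subset_trans gf fe.
Qed.

Lemma heq_del G W P v : heq G W P -> heq (hdel G v) (W :\ v) [set e in P | v \notin e].
Proof.
case=> eV R1 R2; split => /=; first by rewrite eV.
- move=> f; rewrite inE => /andP [/R1 [e eP ef] vf]; exists e => //.
  by rewrite inE eP /=; apply: contra vf; apply: (subsetP ef).
- move=> e; rewrite inE => /andP [/R2 [f fE fe] ve]; exists f => //.
  by rewrite inE fE /=; apply: contra ve; apply: (subsetP fe).
Qed.

Lemma heq_con G W P v : heq G W P -> heq (hcon G v) (W :\ v) [set e :\ v | e in P].
Proof.
case=> eV R1 R2; apply: heq_cl; split => /=; first by rewrite eV.
- move=> f /imsetP [f0 /R1 [e eP ef] ->]; exists (e :\ v); first exact: imset_f.
  exact: setSD.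
- move=> f /imsetP [e0 /R2 [f0 fE fe] ->]; exists (f0 :\ v); first exact: imset_f.
  exact: setSD.
Qed.

Lemma heq_dels s : forall G W P, heq G W P ->
  heq (foldl (@hdel U) G s) (W :\: [set u in s]) [set e in P | all (fun u => u \notin e) s].
Proof.
elim: s => [|v s IH] G W P h /=.
- have -> : [set u in [::] : seq U] = set0 by apply/setP => u; rewrite !inE.
  rewrite setD0; have -> // : [set e in P | true] = P by apply/setP => e; rewrite inE andbT.
- have := IH _ _ _ (heq_del v h).
  have -> : W :\ v :\: [set u in s] = W :\: [set u in v :: s].
    by apply/setP => u; rewrite !inE; case: (u == v); rewrite ?andbF ?andbT.
    idtac.
  have -> // : [set e in [set e in P | v \notin e] | all (fun u => u \notin e) s]
     = [set e in P | all (fun u => u \notin e) (v :: s)].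
  by apply/setP => e; rewrite !inE /= andbA.
Qed.

Lemma heq_cons s : forall G W P, heq G W P ->
  heq (foldl (@hcon U) G s) (W :\: [set u in s]) [set e :\: [set u in s] | e in P].
Proof.
elim: s => [|v s IH] G W P h /=.
- have -> : [set u in [::] : seq U] = set0 by apply/setP => u; rewrite !inE.
  rewrite setD0; have -> // : [set e :\: set0 | e in P] = P.
  by rewrite (eq_imset _ (fun e => setD0 e)) imset_id.
- have := IH _ _ _ (heq_con v h).
  have E : forall A, A :\ v :\: [set u in s] = A :\: [set u in v :: s].
    by move=> A; apply/setP => u; rewrite !inE; case: (u == v); rewrite ?andbF ?andbT.
  rewrite E -imset_comp.
  by rewrite (eq_imset _ (fun e => E e)).
Qed.

Lemma heq_join G1 G2 W1 W2 P1 P2 : heq G1 W1 P1 -> heq G2 W2 P2 ->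
  heq (hjoin G1 G2) (W1 :|: W2) (P1 :|: P2).
Proof.
case=> e1 R1 S1 [e2 R2 S2]; apply: heq_cl; split => /=; first by rewrite e1 e2.
- move=> f; rewrite inE => /orP [/R1 | /R2] [e eP ef]; exists e => //; by rewrite inE eP ?orbT.
- move=> f; rewrite inE => /orP [/S1 | /S2] [e eP ef]; exists e => //; by rewrite inE eP ?orbT.
Qed.

Lemma heq_refl G : heq G (hV G) (hE G).
Proof. by split => // e eE; exists e. Qed.

Lemma heq_minor G D C : heq (minor G D C) (hV G :\: D :\: C)
  [set e :\: C | e in [set e in hE G | all (fun u => u \notin e) (enum D)]].
Proof.
have := heq_cons (enum C) (heq_dels (enum D) (heq_refl G)).
by rewrite !set_enum.
Qed.

End Aux.

Theorem mainTheorem14 (V : finType) (H : hgraph V) (T S : {set V}) (x : V) :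
  is_clutter H ->
  T \in hE (blocker H) ->
  S \subset hV H ->
  x \in hV H ->
  (exists T' : {set V},
      [/\ T' \subset T :\ x, T' \in hE (blocker (hdel H x))
        & T' :&: S = (T :\ x) :&: S])
  \/
  (exists (z : V) (h : {set V}),
      [/\ z \in S :\ x, h \in hE H, x \in h, h :&: T = [set z]
        & T :\ z \in hE (blocker (hcirc H h x z))]).
Proof.
move=> _ HT _ _.
move: HT; rewrite /blocker /= inE => /andP [trT minT].
move: (trT) => /andP [TV hitT].
have priv : forall t, t \in T -> exists2 e, e \in hE H & e :&: T = [set t].
  move=> t tT; have := forallP minT (T :\ t); rewrite properD1 //= /Defs.transversal.
  rewrite (subset_trans (subsetDl T [set t]) TV) /= negb_forall => /existsP [e].
  rewrite negb_imply negbK => /andP [eE /eqP e0]; exists e => //.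
  have key : forall y, y \in e -> y \in T -> y = t.
    move=> y ye yT; apply/eqP; apply/negP => /negP yt.
    have : y \in e :&: (T :\ t) by rewrite !inE ye yt yT.
    by rewrite e0 inE.
  apply/setP => y; rewrite !inE; apply/andP/eqP => [[ye yT]|->]; first exact: key.
  have := forallP hitT e; rewrite eE /= => /set0Pn [w]; rewrite inE => /andP [we wT].
  by rewrite -(key w we wT).
case: (boolP [exists z in (T :\ x) :&: S,
   [forall e in hE H, (x \notin e) ==> (e :&: T != [set z])]]).
- move=> /existsP [z /andP [zTS /forallP zno]].
  move: zTS; rewrite !inE => /andP [/andP [zx zT] zS].
  have [h hE hT] := priv z zT.
  have xh : x \in h.
    by apply/negPn/negP => xh; have := zno h; rewrite hE xh hT eqxx.
  right; exists z, h; split => //; first by rewrite !inE zx zS.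
  have Hc := heq_join (heq_minor H [set x] (h :\ x)) (heq_minor H [set z] (h :\ z)).
  rewrite enum_set1 /= in Hc.
  have notinh : forall y, y \in T -> y != z -> y \notin h.
    move=> y yT yz; apply/negP => yh.
    have : y \in h :&: T by rewrite inE yh yT.
    by rewrite hT inE (negbTE yz).
  rewrite !enum_set1 /= ?andbT in Hc.
  have other : forall A : {set V}, A != set0 -> A != [set z] -> exists2 y, y \in A & y != z.
    move=> A A0 Az; case: (set_0Vmem (A :\ z)) => [/eqP|[y]].
      by rewrite setD_eq0 subset1 (negbTE A0) (negbTE Az).
    by rewrite !inE => /andP [yz yA]; exists y.
  have hit : forall (e : {set V}) (w y : V), y \in e -> y \in T -> y != z -> (e :\: (h :\ w)) :&: (T :\ z) != set0.
    move=> e w y ye yT yz; apply/set0Pn; exists y.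
    by rewrite !inE ye yT yz (negbTE (notinh y yT yz)) /= andbF.
  rewrite inE /min_transversal (heq_trans _ Hc); apply/andP; split.
  - apply/andP; split.
    + apply/subsetP => y; rewrite !inE => /andP [yz yT].
      have yh := notinh y yT yz.
      have yx : y != x by apply: contraNneq yh => ->.
      by rewrite (negbTE yh) yx (subsetP TV _ yT) /= ?andbF ?andbT.
    + apply/forallP => f; apply/implyP; rewrite inE => /orP [] /imsetP [e];
        rewrite inE => /and3P [eE xe _] ->.
      * have := forallP hitT e; rewrite eE /= => e0.
        have := zno e; rewrite eE xe /= => ez.
        have [y] := other _ e0 ez; rewrite inE => /andP [ye yT] yz.
        exact: hit e x y ye yT yz.
      * have := forallP hitT e; rewrite eE /= => /set0Pn [y]; rewrite inE => /andP [ye yT].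
        have yz : y != z by apply: contraNneq xe => <-; rewrite ye.
        exact: hit e z y ye yT yz.
  - apply/forallP => Y; apply/implyP => /properP [YT [t tT tY]].
    rewrite (heq_trans _ Hc); apply/negP => /andP [_ /forallP hY].
    move: tT; rewrite !inE => /andP [tz tT].
    have [e eE eT] := priv t tT.
    have ze : z \notin e.
      apply/negP => ze; have : z \in e :&: T by rewrite inE ze zT.
      by rewrite eT !inE eq_sym (negbTE tz).
    have := hY (e :\: (h :\ z)); rewrite inE; apply/negP; rewrite negb_imply negbK.
    apply/andP; split.
      by apply/orP; right; apply/imsetP; exists e => //; rewrite inE eE /= ze.
    apply/eqP/setP => y; rewrite !inE; apply/negP => /andP [/andP [_ ye] yY].
    have : y \in e :&: T by rewrite inE ye; move: (subsetP YT y yY); rewrite inE => /andP [].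
    rewrite eT inE => /eqP yt; by move: tY; rewrite -yt yY.
- rewrite negb_exists => /forallP nz.
  have pz : forall z, z \in (T :\ x) :&: S ->
      exists2 e, e \in hE (hdel H x) & e :&: T = [set z].
    move=> z zin; have := nz z; rewrite zin /= negb_forall => /existsP [e].
    rewrite negb_imply negb_imply negbK => /andP [eE /andP [xe /eqP eT]].
    by exists e => //; rewrite /hdel /= inE eE.
  have PT : [pred Y | Defs.transversal (hdel H x) Y && (Y \subset T :\ x)] (T :\ x).
    rewrite inE subxx andbT /Defs.transversal /= setSD //=.
    apply/forallP => e; apply/implyP; rewrite inE => /andP [eE xe].
    have := forallP hitT e; rewrite eE /= => /set0Pn [y]; rewrite inE => /andP [ye yT].
    apply/set0Pn; exists y; rewrite !inE ye yT andbT /=.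
    by apply: contraNneq xe => <-.
  have [T' /minsetP [/andP [trT' T'T] minT'] _] := minset_exists PT.
  left; exists T'; split => //.
    rewrite inE /min_transversal trT' /=; apply/forallP => Y; apply/implyP => YP.
    apply/negP => trY; move: YP; rewrite properEneq => /andP [/eqP YT' sYT'].
    apply: YT'; apply: minT' => //; rewrite inE trY /=.
    exact: subset_trans sYT' T'T.
  apply/eqP; rewrite eqEsubset setSI //=; apply/subsetP => z zin.
  have [e eE eT] := pz z zin.
  move: (trT') => /andP [_ /forallP /(_ e)]; rewrite eE /= => /set0Pn [w].
  rewrite inE => /andP [we wT'].
  have : w \in e :&: T by rewrite inE we; move: (subsetP T'T w wT'); rewrite !inE => /andP [].
  rewrite eT inE => /eqP wz; move: zin; rewrite inE => /andP [_ zS].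
  by rewrite inE wz in wT' *; rewrite wT' zS.
Qed.
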